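(* Let $\forall\overline p\,\Gamma/^2\phi$ be a $\Pi_2$-rule with $\overline p=p_1,\dots,p_n$ and let $C=\{p_1,\dots,p_n\}$. Then $\forall\overline p\,\Gamma/^2\phi$ is admissible over $\vdash_S$ if and only if for every $C$-invariant substitution $\sigma$, $\vdash_S\sigma(\Gamma)$ implies $\vdash_S\sigma(\phi)$.
   Context: $\vdash$ is a finitary structural logic over a signature $\mathcal L$, and $\vdash_S$ a Hilbert-style system for it. A $\Pi_2$-rule $\forall\overline p\,\Gamma/^2\phi$ consists of a finite set of formulas $\Gamma=\{\phi_i(\overline p,\overline q)\}$ and a formula $\phi(\overline q)$ not containing the variables $\overline p$. For a set $\Sigma$ of $\Pi_2$-rules, $\vdash_{S\oplus\Sigma}\psi$ means there is a sequence $\psi_0,\dots,\psi_m=\psi$ where each $\psi_i$ is an axiom instance of $\vdash_S$, or follows from earlier members by a rule of $\vdash_S$, or $\psi_i=\chi(\overline\xi/\overline q)$ where $\forall\overline p\{\mu_0,\dots,\mu_k\}/^2\chi(\overline q)\in\Sigma$ and each $\mu_j(\overline r/\overline p,\overline\xi/\overline q)$ occurs earlier, with $\overline r$ fresh variables not occurring in $\overline\xi$. A $\Pi_2$-rule $\rho$ is admissible over $\vdash_S$ if for all $\psi$, $\vdash_{S\oplus\{\rho\}}\psi$ implies $\vdash_S\psi$. For a finite set $C$ of variables, a substitution $\sigma$ is $C$-invariant if $\sigma(p)=p$ for $p\in C$ and, for every variable $q\notin C$, $\sigma(q)$ contains no variable from $C$. *)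

(* Defs.v *)
From Stdlib Require Import List Arith Fin.
Import ListNotations.
Set Implicit Arguments.

Section Syntax.
Variable Op : Type.
Variable ar : Op -> nat.

Inductive form : Type :=
| Var : nat -> form
| App : forall o : Op, (Fin.t (ar o) -> form) -> form.

Fixpoint subst (s : nat -> form) (f : form) : form :=
  match f with
  | Var n => s n
  | @App o args => @App o (fun k => subst s (args k))
  end.

Inductive occurs (v : nat) : form -> Prop :=
| occ_var : occurs v (Var v)
| occ_app : forall o (args : Fin.t (ar o) -> form) k,
    occurs v (args k) -> occurs v (@App o args).

(* A Hilbert-style system: a set of axioms and a set of finitary rules
   (premises, conclusion); instances are obtained by substitution. *)
Record hilbert := Hilbert {
  axioms : form -> Prop;
  rules : list form -> form -> Prop }.

(* The sequence-style notion of derivation: [J earlier psi] says that psi is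
   justified given the list [earlier] of previous members. *)
Definition derivation (J : list form -> form -> Prop) (l : list form) : Prop :=
  forall i psi, nth_error l i = Some psi -> J (firstn i l) psi.

Definition derivable (J : list form -> form -> Prop) (psi : form) : Prop :=
  exists l, derivation J (l ++ [psi]).

Definition step_S (S : hilbert) (earlier : list form) (psi : form) : Prop :=
  (exists (a : form) (s : nat -> form), axioms S a /\ psi = subst s a)
  \/ (exists (prems : list form) (c : form) (s : nat -> form),
        rules S prems c /\ psi = subst s c /\
        (forall mu, In mu prems -> In (subst s mu) earlier)).

Definition provable (S : hilbert) (psi : form) : Prop := derivable (step_S S) psi.

Record pi2rule := Pi2 {
  pvars : list nat;
  prem : list form;
  concl : form;
  pvars_uniq : NoDup pvars;
  concl_no_p : forall p, In p pvars -> ~ occurs p concl }.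

Definition inb (v : nat) (l : list nat) : bool := existsb (Nat.eqb v) l.

Definition qvar (rho : pi2rule) (q : nat) : Prop :=
  ~ In q (pvars rho) /\
  (occurs q (concl rho) \/ exists mu, In mu (prem rho) /\ occurs q mu).

(* Application of the Pi_2-rule rho: psi = phi(xibar/qbar), and each
   mu(rbar/pbar, xibar/qbar) (mu in Gamma) occurs earlier, where rbar are
   distinct fresh variables not occurring in xibar. The renaming p_i |-> r_i
   is [r], the substitution q |-> xi_q is [xi]. *)
Definition step_rule (rho : pi2rule) (earlier : list form) (psi : form) : Prop :=
  exists (r : nat -> nat) (xi : nat -> form),
    (forall p p', In p (pvars rho) -> In p' (pvars rho) -> r p = r p' -> p = p') /\
    (forall p q, In p (pvars rho) -> qvar rho q -> ~ occurs (r p) (xi q)) /\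
    psi = subst xi (concl rho) /\
    (forall mu, In mu (prem rho) ->
       In (subst (fun v => if inb v (pvars rho) then Var (r v) else xi v) mu)
          earlier).

Definition step_S_rule (S : hilbert) (rho : pi2rule)
    (earlier : list form) (psi : form) : Prop :=
  step_S S earlier psi \/ step_rule rho earlier psi.

Definition provable_with (S : hilbert) (rho : pi2rule) (psi : form) : Prop :=
  derivable (step_S_rule S rho) psi.

Definition admissible (S : hilbert) (rho : pi2rule) : Prop :=
  forall psi, provable_with S rho psi -> provable S psi.

Definition C_invariant (C : list nat) (s : nat -> form) : Prop :=
  (forall p, In p C -> s p = Var p) /\
  (forall q, ~ In q C -> forall p, In p C -> ~ occurs p (s q)).

End Syntax.

(* Main.v *)
Require Import Defs.
From Stdlib Require Import List Arith Lia Bool FunctionalExtensionality.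
Import ListNotations.

Section Helpers.
Context {Op : Type} {ar : Op -> nat}.
Notation F := (form ar).

Lemma subst_comp (t s : nat -> F) (f : F) :
  subst t (subst s f) = subst (fun v => subst t (s v)) f.
Proof.
  induction f as [n|o args IH]; simpl; auto.
  f_equal; apply functional_extensionality; auto.
Qed.

Lemma subst_var (f : F) : subst (Var ar) f = f.
Proof.
  induction f as [n|o args IH]; simpl; auto.
  f_equal; apply functional_extensionality; auto.
Qed.

Lemma occurs_inv (v : nat) (f : F) : occurs v f ->
  match f with Var _ n => v = n | App o args => exists k, occurs v (args k) end.
Proof. intros H; destruct H; eauto. Qed.

Lemma subst_ext_occ (s s' : nat -> F) (f : F) :
  (forall v, occurs v f -> s v = s' v) -> subst s f = subst s' f.
Proof.
  induction f as [n|o args IH]; simpl; intros H.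
  - apply H; constructor.
  - f_equal; apply functional_extensionality; intro k; apply IH.
    intros v Hv; apply H; econstructor; eauto.
Qed.

Lemma occurs_subst (s : nat -> F) (f : F) v :
  occurs v (subst s f) -> exists w, occurs w f /\ occurs v (s w).
Proof.
  induction f as [n|o args IH]; simpl; intros H.
  - exists n; split; auto; constructor.
  - apply occurs_inv in H; destruct H as [k Hk].
    destruct (IH k Hk) as [w [H1 H2]]; exists w; split; auto; econstructor; eauto.
Qed.

Lemma fin_bound n (P : Fin.t n -> nat -> Prop)
  (mono : forall k a b, a <= b -> P k a -> P k b) :
  (forall k, exists N, P k N) -> exists N, forall k, P k N.
Proof.
  induction n as [|n IHn]; intros H.
  - exists 0; intro k; apply (Fin.case0 (fun k => P k 0)).
  - destruct (IHn (fun k => P (Fin.FS k))) as [N1 HN1].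
    + intros; eapply mono; eauto.
    + intros; apply H.
    + destruct (H Fin.F1) as [N0 HN0].
      exists (N0 + N1); intro k.
      apply (Fin.caseS' k (fun k => P k (N0 + N1))).
      * eapply mono; [|eauto]; lia.
      * intro p; eapply mono; [|apply HN1]; lia.
Qed.

Lemma form_bound (f : F) : exists N, forall v, occurs v f -> v < N.
Proof.
  induction f as [n|o args IH].
  - exists (S n); intros v Hv; apply occurs_inv in Hv; lia.
  - destruct (fin_bound _ (fun k N => forall v, occurs v (args k) -> v < N)) as [N HN].
    + intros k a b Hab Hk v Hv; specialize (Hk v Hv); lia.
    + exact IH.
    + exists N; intros v Hv; apply occurs_inv in Hv; destruct Hv as [k Hk]; eauto.
Qed.

Lemma list_bound (l : list nat) : exists N, forall v, In v l -> v < N.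
Proof.
  induction l as [|a l [N HN]]; simpl.
  - exists 0; tauto.
  - exists (S (a + N)); intros v [->|Hv]; [|specialize (HN v Hv)]; lia.
Qed.

Lemma inb_spec v l : inb v l = true <-> In v l.
Proof.
  unfold inb; rewrite existsb_exists; split.
  - intros [x [Hx Hx']]; apply Nat.eqb_eq in Hx'; subst; auto.
  - intros H; exists v; split; auto; apply Nat.eqb_refl.
Qed.

Definition monoJ (J : list F -> F -> Prop) :=
  forall E E' psi, incl E E' -> J E psi -> J E' psi.

Lemma derivation_app J (HJ : monoJ J) l1 l2 :
  derivation J l1 -> derivation J l2 -> derivation J (l1 ++ l2).
Proof.
  unfold derivation; intros H1 H2 i psi Hi.
  destruct (Nat.lt_ge_cases i (length l1)) as [Hl|Hl].
  - rewrite nth_error_app1 in Hi by lia.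
    rewrite firstn_app, (proj2 (Nat.sub_0_le i (length l1))) by lia.
    simpl; rewrite app_nil_r; auto.
  - rewrite nth_error_app2 in Hi by lia.
    specialize (H2 _ _ Hi).
    eapply HJ; [|exact H2].
    rewrite firstn_app, (firstn_all2 (n:=i) l1) by lia.
    intros x Hx; apply in_or_app; right; auto.
Qed.

Lemma derivation_snoc J (HJ : monoJ J) l psi :
  derivation J l -> J l psi -> derivation J (l ++ [psi]).
Proof.
  intros H Hp i x Hi.
  destruct (Nat.lt_ge_cases i (length l)) as [Hl|Hl].
  - rewrite nth_error_app1 in Hi by lia.
    rewrite firstn_app, (proj2 (Nat.sub_0_le i (length l))) by lia.
    simpl; rewrite app_nil_r; auto.
  - rewrite nth_error_app2 in Hi by lia.
    destruct (i - length l) as [|k] eqn:E; simpl in Hi; [|destruct k; discriminate].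
    inversion Hi; subst.
    replace i with (length l) by lia. rewrite firstn_app, firstn_all, Nat.sub_diag.
    simpl; rewrite app_nil_r; auto.
Qed.

Lemma derivation_mono (J J' : list F -> F -> Prop) l : (forall E x, J E x -> J' E x) ->
  derivation J l -> derivation J' l.
Proof. unfold derivation; eauto. Qed.

Lemma combine J (HJ : monoJ J) (E : list F) :
  (forall x, In x E -> derivable J x) -> exists D, derivation J D /\ incl E D.
Proof.
  induction E as [|a E IH]; intros H.
  - exists []; split; [intros i x Hi; destruct i; discriminate | intros x Hx; inversion Hx].
  - destruct IH as [D [HD HE]]; [intros; apply H; simpl; auto|].
    destruct (H a (or_introl eq_refl)) as [l Hl].
    exists (D ++ (l ++ [a])); split; [apply derivation_app; auto|].
    intros x [->|Hx]; apply in_or_app; [right; apply in_or_app; right; simpl; auto|left; auto].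
Qed.

Lemma step_S_mono (S : hilbert ar) : monoJ (step_S S).
Proof.
  intros E E' psi Hinc [H|H]; [left; auto|right].
  destruct H as [p [c [s [H1 [H2 H3]]]]]; exists p, c, s; repeat split; auto.
Qed.

Lemma step_rule_mono (rho : pi2rule ar) : monoJ (step_rule rho).
Proof.
  intros E E' psi Hinc [r [xi [H1 [H2 [H3 H4]]]]]; exists r, xi; repeat split; auto.
Qed.

Lemma step_S_rule_mono S rho : monoJ (step_S_rule S rho).
Proof.
  intros E E' psi Hinc [H|H]; [left; eapply step_S_mono|right; eapply step_rule_mono]; eauto.
Qed.

Lemma provable_subst (S : hilbert ar) t f : provable S f -> provable S (subst t f).
Proof.
  intros [l Hl]; exists (map (subst t) l).
  change [subst t f] with (map (subst t) [f]); rewrite <- map_app.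
  revert Hl; generalize (l ++ [f]); clear l; intros l Hl i psi Hi.
  rewrite nth_error_map in Hi.
  destruct (nth_error l i) as [x|] eqn:E; [|discriminate]; simpl in Hi; inversion Hi; subst.
  specialize (Hl _ _ E); rewrite firstn_map.
  destruct Hl as [[a [s [Ha ->]]]|[p [c [s [H1 [-> H3]]]]]].
  - left; exists a, (fun v => subst t (s v)); split; auto; apply subst_comp.
  - right; exists p, c, (fun v => subst t (s v)); repeat split; auto.
    + apply subst_comp.
    + intros mu Hmu; rewrite <- subst_comp; apply in_map; auto.
Qed.

Lemma provable_step (S : hilbert ar) E psi :
  (forall x, In x E -> provable S x) -> step_S S E psi -> provable S psi.
Proof.
  intros H Hs; destruct (combine _ (step_S_mono S) E H) as [D [HD HE]].
  exists D; apply derivation_snoc; auto using step_S_mono.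
  eapply step_S_mono; eauto.
Qed.

End Helpers.

Theorem mainTheorem2 (Op : Type) (ar : Op -> nat) (S : hilbert ar)
    (rho : pi2rule ar) :
  admissible S rho <->
  (forall s : nat -> form ar, C_invariant (pvars rho) s ->
     (forall g, In g (prem rho) -> provable S (subst s g)) ->
     provable S (subst s (concl rho))).
Proof.
  split.
  - intros Had s [Hs1 Hs2] Hprem. apply Had.
    destruct (combine _ (step_S_mono S) (map (subst s) (prem rho))) as [D [HD HE]].
    { intros x Hx; apply in_map_iff in Hx; destruct Hx as [g [<- Hg]]; apply Hprem; auto. }
    exists D; apply derivation_snoc; [apply step_S_rule_mono| |].
    + eapply derivation_mono; [|exact HD]; intros; left; auto.
    + right; exists (fun v => v), s; repeat split; auto.
      * intros p q Hp [Hq _]; apply Hs2; auto.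
      * intros mu Hmu; apply HE.
        replace (subst _ mu) with (subst s mu); [apply in_map; auto|].
        apply subst_ext_occ; intros v _.
        destruct (inb v (pvars rho)) eqn:E; auto.
        apply inb_spec in E; auto.
  - intros Hyp psi [l Hl]. 
    assert (Hall : forall n l', length l' <= n -> derivation (step_S_rule S rho) l' ->
                   forall x, In x l' -> provable S x).
    2:{ eapply Hall; eauto. apply in_or_app; right; simpl; auto. }
    clear l Hl psi.
    induction n as [|n IHn]; intros l' Hlen Hd x Hx.
    { destruct l'; [inversion Hx|simpl in Hlen; lia]. }
    destruct (In_nth_error _ _ Hx) as [i Hi].
    pose proof (Hd _ _ Hi) as Hj.
    assert (Hlt : i < length l') by (apply nth_error_Some; congruence).
    assert (Hprev : forall y, In y (firstn i l') -> provable S y).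
    { apply (IHn (firstn i l')).
      - rewrite length_firstn; lia.
      - intros j z Hz.
        assert (j < i). { assert (Hz' : nth_error (firstn i l') j <> None) by congruence.
          apply nth_error_Some in Hz'. rewrite length_firstn in Hz'. lia. }
        rewrite nth_error_firstn in Hz. destruct (j <? i) eqn:?; [|discriminate].
        rewrite firstn_firstn, Nat.min_l by lia. apply Hd; auto. }
    destruct Hj as [Hj|Hj]; [eapply provable_step; eauto|].
    destruct Hj as [r [xi [Hinj [Hfresh [-> Hmu]]]]].
    set (C := pvars rho) in *.
    destruct (list_bound (C ++ map r C)) as [N1 HN1].
    destruct (form_bound (subst xi (concl rho))) as [N2 HN2].
    set (NN := N1 + N2).
    set (th2 := fun v => if orb (inb v C) (inb v (map r C)) then Var ar (NN + v) else Var ar v).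
    set (inv := fun v => match find (fun p => Nat.eqb (r p) v) C with Some p => p | None => v end).
    set (th := fun v => if inb v (map r C) then Var ar (inv v) else th2 v).
    set (sigma := fun v => if inb v C then Var ar v else subst th2 (xi v)).
    assert (Hinv : forall p, In p C -> inv (r p) = p).
    { intros p Hp; unfold inv.
      destruct (find (fun p0 => r p0 =? r p) C) eqn:E.
      - apply find_some in E; destruct E as [E1 E2]; apply Nat.eqb_eq in E2; auto.
      - eapply find_none in E; [|exact Hp]; rewrite Nat.eqb_refl in E; discriminate. }
    assert (Hqv : forall q mu, In mu (prem rho) -> occurs q mu -> ~ In q C -> qvar rho q).
    { intros q mu Hm Ho Hq; split; auto; right; eauto. }
    (* xi q for qvar q contains no r p *)
    assert (Hxi : forall q, qvar rho q -> subst th2 (xi q) = subst th (xi q)).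
    { intros q Hq; apply subst_ext_occ; intros v Hv; unfold th.
      destruct (inb v (map r C)) eqn:E; auto.
      apply inb_spec, in_map_iff in E; destruct E as [p [<- Hp]].
      exfalso; eapply Hfresh; eauto. }
    assert (Hsig : C_invariant C sigma).
    { split.
      - intros p Hp; unfold sigma; apply inb_spec in Hp; rewrite Hp; auto.
      - intros q Hq p Hp Ho; unfold sigma in Ho.
        destruct (inb q C) eqn:E; [apply inb_spec in E; tauto|].
        apply occurs_subst in Ho; destruct Ho as [w [_ Hw]]; unfold th2 in Hw.
        destruct (orb (inb w C) (inb w (map r C))) eqn:E2; apply occurs_inv in Hw.
        + assert (p < N1) by (apply HN1, in_or_app; auto); lia.
        + subst w; apply Bool.orb_false_elim in E2; destruct E2 as [E2 _].
          apply inb_spec in Hp; congruence. }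
    assert (Hc : provable S (subst sigma (concl rho))).
    { apply Hyp; auto. intros g Hg.
      specialize (Hmu g Hg).
      pose proof (provable_subst S th _ (Hprev _ Hmu)) as P.
      rewrite subst_comp in P.
      replace (subst sigma g) with
        (subst (fun v => subst th (if inb v C then Var ar (r v) else xi v)) g); auto.
      apply subst_ext_occ; intros v Hv; unfold sigma.
      destruct (inb v C) eqn:E.
      - apply inb_spec in E; simpl; unfold th.
        replace (inb (r v) (map r C)) with true; [rewrite Hinv; auto|].
        symmetry; apply inb_spec, in_map; auto.
      - rewrite Hxi; auto. eapply Hqv; eauto. intro H; apply inb_spec in H; congruence. }
    pose proof (provable_subst S (fun w => if NN <=? w then Var ar (w - NN) else Var ar w) _ Hc) as P.
    rewrite subst_comp in P.
    replace (subst xi (concl rho)) with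
      (subst (fun v => subst (fun w => if NN <=? w then Var ar (w - NN) else Var ar w) (sigma v))
         (concl rho)); auto.
    apply subst_ext_occ; intros v Hv.
    assert (HvC : ~ In v C) by (intro; eapply concl_no_p; eauto).
    unfold sigma; destruct (inb v C) eqn:E; [apply inb_spec in E; tauto|].
    assert (Hq : qvar rho v) by (split; auto).
    rewrite subst_comp. transitivity (subst (Var ar) (xi v)); [|apply subst_var].
    apply subst_ext_occ; intros w Hw.
    assert (HwN : w < N2).
    { apply HN2. clear -Hv Hw. revert Hv. generalize (concl rho). intro f.
      induction f as [n|o args IH]; simpl; intros H.
      - apply occurs_inv in H; subst; auto.
      - apply occurs_inv in H; destruct H as [k Hk]; econstructor; eauto. }
    unfold th2.
    destruct (inb w (map r C)) eqn:E2.
    { apply inb_spec, in_map_iff in E2; destruct E2 as [p [<- Hp]].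
      exfalso; eapply Hfresh; eauto. }
    rewrite Bool.orb_false_r.
    destruct (inb w C) eqn:E3; simpl.
    * destruct (NN <=? NN + w) eqn:Eb; [f_equal; lia|apply Nat.leb_gt in Eb; lia].
    * destruct (NN <=? w) eqn:Eb; [apply Nat.leb_le in Eb; unfold NN in *; lia | auto].
Qed.
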